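(* Let $K$ be a twisted knot diagram with an even number of bars, and consider colorings of $K$ by the twisted biquandle $(\mathbb{Z}_{S(K)},\ a\ast b=a\circ b=a+1,\ f(a)=-a)$ (with $\mathbb{Z}_0=\mathbb{Z}$). For a coloring $F$ and a real crossing $c$ let $\mathrm{Ind}_F(c)=y-x\in\mathbb{Z}_{S(K)}$. Then: (i) if $c\in C_e(K)$, $\mathrm{Ind}_F(c)$ does not depend on the coloring $F$; (ii) if $c\in C_o(K)$, then as $F$ ranges over all colorings, the set of values $\{\mathrm{Ind}_F(c)\}$ is exactly the set of all even elements or exactly the set of all odd elements of $\mathbb{Z}_{S(K)}$.
   Context: A twisted knot diagram is a virtual knot diagram with finitely many bars on its edges. With $2n$ bars cutting $K$ into edges $e_1,\dots,e_{2n}$ (consecutive along the orientation), $s(e)=u_+(e)+o_-(e)-u_-(e)-o_+(e)$ where $o_\pm(e)$ (resp. $u_\pm(e)$) counts positive/negative crossings at which $e$ is the over- (resp. under-) strand, and $S(K)=\left|\sum_{i=1}^n s(e_{2i-1})-\sum_{i=1}^n s(e_{2i})\right|$ ($S(K)=0$ if no bars); $S(K)$ is always even, so parity in $\mathbb{Z}_{S(K)}$ is well defined. Segments are the pieces between real crossings and bars. A coloring labels segments by elements of $\mathbb{Z}_{S(K)}$ so that at each real crossing, with $x$ the label of the under-strand segment to the right of the over-strand and $y$ the label of the over-strand segment to the right of the under-strand (right with respect to strand orientations), the other under-segment is labeled $x+1$ and the other over-segment $y+1$, and labels on the two sides of a bar are negatives of each other. In the Gauss diagram of $K$ (a circle with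 one chord per real crossing, with the bars marked as points on the circle), each chord $c$ splits the circle into two arcs; since the total number of bars is even, either both arcs contain an even number of bars ($c\in C_e(K)$) or both contain an odd number ($c\in C_o(K)$). *)

(* Defs.v *)
(* Twisted knot diagrams are encoded by their Gauss diagram
   with bars: the cyclic sequence of events met when travelling along the
   oriented knot (virtual crossings are invisible). *)
From HB Require Import structures.
From mathcomp Require Import all_boot all_order all_algebra.
Set Implicit Arguments. Unset Strict Implicit. Unset Printing Implicit Defensive.
Import GRing.Theory Num.Theory.
Local Open Scope ring_scope.

Inductive event := Over of nat | Under of nat | Bar.

Definition is_bar (e : event) : bool := if e is Bar then true else false.
Definition is_over (c : nat) (e : event) : bool :=
  if e is Over c' then c' == c else false.
Definition is_under (c : nat) (e : event) : bool :=
  if e is Under c' then c' == c else false.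

Definition wf_gauss (w : seq event) : Prop :=
  forall c, count (is_over c) w = count (is_under c) w /\
            (count (is_over c) w <= 1)%N.

Definition is_crossing (w : seq event) (c : nat) : bool := has (is_over c) w.
Definition over_pos (w : seq event) (c : nat) : nat := find (is_over c) w.
Definition under_pos (w : seq event) (c : nat) : nat := find (is_under c) w.

(* Segments: segment j (j < size w) is the piece of the knot from event j to
   event j+1 (cyclically).  At event j the incoming segment is [prev_seg w j]
   and the outgoing one is j. *)
Definition prev_seg (w : seq event) (j : nat) : nat := ((j + size w).-1 %% size w)%N.

(* Contribution of an event to s(e): sg c = true means c is positive.
   under of positive: +1 (u_+), under of negative: -1 (u_-),
   over of positive: -1 (o_+), over of negative: +1 (o_-). *)
Definition delta (sg : nat -> bool) (e : event) : int :=
  match e with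
  | Over c => if sg c then -1 else 1
  | Under c => if sg c then 1 else -1
  | Bar => 0
  end.

(* (-1)^(number of bars before position j): +1 on edges e_1,e_3,..., -1 on
   e_2,e_4,... (the edge through position 0 is e_1). *)
Definition bar_sign (w : seq event) (j : nat) : int :=
  (-1) ^+ count is_bar (take j w).

(* S(K) = | sum_i s(e_{2i-1}) - sum_i s(e_{2i}) |  (0 if there are no bars,
   which this formula gives automatically). *)
Definition Sval (sg : nat -> bool) (w : seq event) : nat :=
  absz (\sum_(j < size w) bar_sign w j * delta sg (nth Bar w j)).

(* equality in Z_S (Z_0 = Z) *)
Definition eqm (S : nat) (a b : int) : Prop := (a = b %[mod S%:Z])%Z.

(* Colorings by the twisted biquandle (Z_S, a*b = a o b = a+1, f(a) = -a),
   labels represented by integers.  Positive crossing: x = incoming under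
   label, y = outgoing over label; negative crossing: x = outgoing under
   label, y = incoming over label. *)
Definition coloring (sg : nat -> bool) (w : seq event) (F : nat -> int) : Prop :=
  let S := Sval sg w in
  forall j, (j < size w)%N ->
    match nth Bar w j with
    | Bar => eqm S (F j) (- F (prev_seg w j))
    | Over c => if sg c then eqm S (F (prev_seg w j)) (F j + 1)
                else eqm S (F j) (F (prev_seg w j) + 1)
    | Under c => if sg c then eqm S (F j) (F (prev_seg w j) + 1)
                 else eqm S (F (prev_seg w j)) (F j + 1)
    end.

Definition Ind (sg : nat -> bool) (w : seq event) (F : nat -> int) (c : nat) : int :=
  let p := over_pos w c in let q := under_pos w c in
  if sg c then F p - F (prev_seg w q) else F (prev_seg w p) - F q.

Definition bars_between (w : seq event) (c : nat) : nat :=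
  let p := over_pos w c in let q := under_pos w c in
  count is_bar (drop (minn p q).+1 (take (maxn p q) w)).

Definition even_chord (w : seq event) (c : nat) : bool := ~~ odd (bars_between w c).

(* Main.v *)
Require Import Defs.
From mathcomp Require Import all_boot all_order all_algebra.
Import GRing.Theory Num.Theory.
From mathcomp Require Import zify ring.

Local Open Scope ring_scope.

Definition Tsum sg w k : int := \sum_(j < k) bar_sign w j * delta sg (nth Bar w j).
Definition Hv sg w (a : int) k : int := bar_sign w k * (a + Tsum sg w k).
Definition step sg (e : event) (x : int) : int := if is_bar e then - x else x + delta sg e.

Lemma dvdD {S x y : int} : (S %| x)%Z -> (S %| y)%Z -> (S %| x + y)%Z.
Proof. by move=> *; apply: rpredD. Qed.
Lemma dvdN {S x : int} : (S %| x)%Z -> (S %| - x)%Z.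
Proof. by rewrite rpredN. Qed.
Lemma dvdE {S x y : int} : (S %| x)%Z -> x = y -> (S %| y)%Z.
Proof. by move=> h <-. Qed.

Lemma eqmP S a b : eqm S a b <-> (S%:Z %| a - b)%Z.
Proof. rewrite /eqm -eqz_mod_dvd; split; [by move=> ->|by move/eqP]. Qed.

Lemma step_diff sg e S x y : (S %| x - y)%Z -> (S %| step sg e x - step sg e y)%Z.
Proof.
rewrite /step; case: (is_bar e) => h.
  by eapply (dvdE (dvdN h)); ring.
by eapply (dvdE h); ring.
Qed.

Lemma sign_sq (n : nat) : ((-1) ^+ n * (-1) ^+ n = 1 :> int).
Proof. by rewrite -expr2 sqrr_sign. Qed.

Lemma bar_sign_S w k : (k < size w)%N ->
  bar_sign w k.+1 = bar_sign w k * (if is_bar (nth Bar w k) then -1 else 1).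
Proof.
move=> hk; rewrite /bar_sign (take_nth Bar hk) -cats1 count_cat /= addn0 exprD.
by case: is_bar; rewrite ?expr1 ?expr0.
Qed.

Lemma H_step sg w a k : (k < size w)%N ->
  Hv sg w a k.+1 = step sg (nth Bar w k) (Hv sg w a k).
Proof.
move=> hk; rewrite /Hv /Tsum big_ord_recr /= bar_sign_S // /step.
rewrite -/(Tsum sg w k).
case E: (nth Bar w k) => [c'|c'|] /=.
- rewrite mulr1 mulrDr mulrDr mulrA /bar_sign sign_sq; ring.
- rewrite mulr1 mulrDr mulrDr mulrA /bar_sign sign_sq; ring.
- rewrite mulr0 addr0; ring.
Qed.

Lemma H0 sg w a : Hv sg w a 0 = a.
Proof. by rewrite /Hv /Tsum big_ord0 /bar_sign take0 /= expr0 mul1r addr0. Qed.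

Lemma H_dec sg w a k : Hv sg w a k = bar_sign w k * a + Hv sg w 0 k.
Proof. rewrite /Hv; ring. Qed.

Lemma prev0 w : (0 < size w)%N -> prev_seg w 0 = (size w).-1.
Proof. by move=> h; rewrite /prev_seg add0n modn_small // prednK. Qed.

Lemma prevS w k : (k.+1 < size w)%N -> prev_seg w k.+1 = k.
Proof.
by move=> h; rewrite /prev_seg addSn /= modnDr modn_small // ltnW.
Qed.

Lemma coloringP sg w F : coloring sg w F <->
  forall k, (k < size w)%N ->
    (Sval sg w %| F k - step sg (nth Bar w k) (F (prev_seg w k)))%Z.
Proof.
rewrite /coloring /step; split=> h k /h; case: nth => [c'|c'|] /=.
all: try (case: (sg c')).
all: rewrite ?eqmP => h'; rewrite ?eqmP.
all: first [ (eapply (dvdE h'); ring) | (eapply (dvdE (dvdN h')); ring) ].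
Qed.

Lemma colA sg w F : coloring sg w F -> forall k, (k < size w)%N ->
  (Sval sg w %| F k - Hv sg w (F (size w).-1) k.+1)%Z.
Proof.
move/coloringP=> h; elim=> [|k IH] hk.
  by have := h 0%N hk; rewrite prev0 // H_step // H0.
have hk' : (k < size w)%N by apply: ltnW.
rewrite H_step //; have := h _ hk; rewrite prevS // => h1.
have h2 := @step_diff sg (nth Bar w k.+1) _ _ _ (IH hk').
eapply (dvdE (dvdD h1 h2)); ring.
Qed.

Lemma colB sg w F : coloring sg w F -> forall k, (k < size w)%N ->
  (Sval sg w %| F (prev_seg w k) - Hv sg w (F (size w).-1) k)%Z.
Proof.
move=> hF [|k] hk; first by rewrite prev0 // H0 subrr dvdz0.
by rewrite prevS //; apply: colA => //; apply: ltnW.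
Qed.

Definition Indf sg w c a : int :=
  let p := over_pos w c in let q := under_pos w c in
  if sg c then Hv sg w a p.+1 - Hv sg w a q else Hv sg w a p - Hv sg w a q.+1.

Lemma IndA sg w c F a : (over_pos w c < size w)%N -> (under_pos w c < size w)%N ->
  (forall k, (k < size w)%N -> (Sval sg w %| F k - Hv sg w a k.+1)%Z) ->
  (forall k, (k < size w)%N -> (Sval sg w %| F (prev_seg w k) - Hv sg w a k)%Z) ->
  (Sval sg w %| Ind sg w F c - Indf sg w c a)%Z.
Proof.
move=> hp hq hA hB; rewrite /Ind /Indf; case: (sg c).
  eapply (dvdE (dvdD (hA _ hp) (dvdN (hB _ hq)))); ring.
eapply (dvdE (dvdD (hB _ hp) (dvdN (hA _ hq)))); ring.
Qed.

Lemma S_T sg w : (Sval sg w %| Tsum sg w (size w))%Z.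
Proof. by rewrite dvdzE /Sval /Tsum /= dvdnn. Qed.

Lemma Hn sg w a : ~~ odd (count is_bar w) -> Hv sg w a (size w) = a + Tsum sg w (size w).
Proof. by move=> h; rewrite /Hv /bar_sign take_size -signr_odd (negbTE h) expr0 mul1r. Qed.

Lemma colFa sg w a : ~~ odd (count is_bar w) -> coloring sg w (fun k => Hv sg w a k.+1).
Proof.
move=> hb; apply/coloringP => -[|k] hk /=.
  rewrite prev0 // prednK // Hn // (H_step _ _ _ _ hk) H0.
  apply: step_diff; eapply (dvdE (dvdN (S_T sg w))); ring.
by rewrite prevS // H_step // subrr dvdz0.
Qed.

Lemma IndFa sg w c a : ~~ odd (count is_bar w) ->
  (over_pos w c < size w)%N -> (under_pos w c < size w)%N ->
  (Sval sg w %| Ind sg w (fun k => Hv sg w a k.+1) c - Indf sg w c a)%Z.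
Proof.
move=> hb hp hq; apply: IndA => // -[|k] hk /=; rewrite ?subrr ?dvdz0 //.
  rewrite prev0 // prednK // Hn // H0; eapply (dvdE (S_T sg w)); ring.
by rewrite prevS // subrr dvdz0.
Qed.

Lemma pos_facts w c : wf_gauss w -> is_crossing w c ->
  [/\ (over_pos w c < size w)%N, (under_pos w c < size w)%N,
      nth Bar w (over_pos w c) = Over c & nth Bar w (under_pos w c) = Under c].
Proof.
move=> hw hc; have [e1 e2] := hw c.
have hu : has (is_under c) w by rewrite has_count -e1 -has_count.
have ho := nth_find Bar hc; have hu' := nth_find Bar hu.
split; rewrite -?has_find //.
  by move: ho; rewrite /over_pos; case: nth => //= c' /eqP ->.
by move: hu'; rewrite /under_pos; case: nth => //= c' /eqP ->.
Qed.

Lemma cb_split w m M : (m < M)%N -> (M <= size w)%N -> ~~ is_bar (nth Bar w m) ->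
  count is_bar (take M w) = (count is_bar (take m w) + count is_bar (drop m.+1 (take M w)))%N.
Proof.
move=> hmM hM hnb.
rewrite -{1}(cat_take_drop m (take M w)) count_cat take_takel ?(ltnW hmM) //.
rewrite (drop_nth Bar) ?size_takel // nth_take //= (negbTE hnb) add0n //.
Qed.

Lemma sign_rel w c : wf_gauss w -> is_crossing w c ->
  bar_sign w (under_pos w c) = bar_sign w (over_pos w c) * (-1) ^+ bars_between w c.
Proof.
move=> hw hc; have [hp hq np nq] := pos_facts _ _ hw hc.
rewrite /bars_between /bar_sign; cbv zeta.
case: (ltngtP (over_pos w c) (under_pos w c)) => h.
- by rewrite (cb_split _ _ _ h (ltnW hq)) ?np // exprD.
- rewrite (cb_split _ _ _ h (ltnW hp)) ?nq // exprD -mulrA sign_sq mulr1 //.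
- by move: np; rewrite h nq.
Qed.

Definition ov (e : event) := if e is Over c then Some c else None.
Definition un (e : event) := if e is Under c then Some c else None.

Lemma cnt_ov x w : count_mem x (pmap ov w) = count (is_over x) w.
Proof. by elim: w => //= e w IH; case: e => [c'|c'|] /=; rewrite IH. Qed.
Lemma cnt_un x w : count_mem x (pmap un w) = count (is_under x) w.
Proof. by elim: w => //= e w IH; case: e => [c'|c'|] /=; rewrite IH. Qed.

Lemma nonbar_count w : count (predC is_bar) w = (size (pmap ov w) + size (pmap un w))%N.
Proof.
elim: w => //= e w IH; case: e => [c'|c'|] /=; rewrite IH //.
by rewrite addnS add1n.
Qed.

Lemma nonbar_even w : wf_gauss w -> count (predC is_bar) w = (2 * size (pmap ov w))%N.
Proof.
move=> hw; have hp : perm_eq (pmap ov w) (pmap un w).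
  by apply/allP => x _ /=; rewrite cnt_ov cnt_un (hw x).1.
by rewrite nonbar_count -(perm_size hp) mul2n addnn.
Qed.

Lemma sign_pm w k : bar_sign w k = 1 \/ bar_sign w k = -1.
Proof. by rewrite /bar_sign -signr_odd; case: odd; [right|left]. Qed.

Lemma Tpar sg w k : (k <= size w)%N ->
  (2 %| Tsum sg w k - (count (predC is_bar) (take k w))%:Z)%Z.
Proof.
elim: k => [|k IH] hk; first by rewrite /Tsum big_ord0 take0.
have hk' : (k < size w)%N by [].
have := IH (ltnW hk); rewrite /Tsum big_ord_recr /= -/(Tsum sg w k).
rewrite (take_nth Bar hk') -cats1 count_cat /=.
case: (sign_pm w k) => ->; case: nth => [c'|c'|] /=; try case: (sg c') => /=; lia.
Qed.

Lemma S_even sg w : wf_gauss w -> (2 %| (Sval sg w)%:Z)%Z.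
Proof.
move=> hw; have := Tpar sg w (size w) (leqnn _); rewrite take_size nonbar_even //.
move=> h; have h2 : (2 %| Tsum sg w (size w))%Z by lia.
by move: h2; rewrite !dvdzE.
Qed.

Lemma Indf_dec sg w c a : wf_gauss w -> is_crossing w c ->
  Indf sg w c a = Indf sg w c 0 + (bar_sign w (over_pos w c) - bar_sign w (under_pos w c)) * a.
Proof.
move=> hw hc; have [hp hq np nq] := pos_facts _ _ hw hc.
rewrite /Indf /= (H_dec sg w a (over_pos w c).+1) (H_dec sg w a (under_pos w c))
  (H_dec sg w a (over_pos w c)) (H_dec sg w a (under_pos w c).+1).
rewrite !bar_sign_S // np nq /= !mulr1; case: (sg c); ring.
Qed.

Theorem lemma7p7 (w : seq event) (sg : nat -> bool) (c : nat) :
  wf_gauss w -> ~~ odd (count is_bar w) -> is_crossing w c ->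
  (even_chord w c ->
     forall F G : nat -> int, coloring sg w F -> coloring sg w G ->
       eqm (Sval sg w) (Ind sg w F c) (Ind sg w G c)) /\
  (~~ even_chord w c ->
     (forall z : int, (exists F, coloring sg w F /\ eqm (Sval sg w) (Ind sg w F c) z)
                      <-> (2 %| z)%Z) \/
     (forall z : int, (exists F, coloring sg w F /\ eqm (Sval sg w) (Ind sg w F c) z)
                      <-> ~~ (2 %| z)%Z)).
Proof.
move=> hw hb hc; have [hp hq np nq] := pos_facts _ _ hw hc.
have hsr := sign_rel _ _ hw hc.
have hIF : forall F, coloring sg w F -> (Sval sg w %| Ind sg w F c -
   (Indf sg w c 0 + (bar_sign w (over_pos w c) - bar_sign w (under_pos w c)) * F (size w).-1))%Z.
  move=> F hF; rewrite -Indf_dec //; apply: IndA => //; [exact: colA | exact: colB].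
have hIa : forall a, (Sval sg w %| Ind sg w (fun k => Hv sg w a k.+1) c -
   (Indf sg w c 0 + (bar_sign w (over_pos w c) - bar_sign w (under_pos w c)) * a))%Z.
  by move=> a; rewrite -Indf_dec //; apply: IndFa.
split.
  move=> he F G hF hG.
  rewrite /even_chord in he.
  rewrite -signr_odd (negbTE he) expr0 mulr1 in hsr.
  rewrite hsr subrr in hIF; apply/eqmP.
  eapply (dvdE (dvdD (hIF F hF) (dvdN (hIF G hG)))); ring.
move=> ho; rewrite /even_chord negbK in ho.
rewrite -signr_odd ho expr1 mulrN1 in hsr.
rewrite hsr in hIF hIa.
set sp := bar_sign w (over_pos w c) in hIF hIa hsr *.
set C := Indf sg w c 0 in hIF hIa *.
have hsp : sp * sp = 1 by case: (sign_pm w (over_pos w c)); rewrite -/sp => ->.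
have key : forall z, (exists F, coloring sg w F /\ eqm (Sval sg w) (Ind sg w F c) z)
   <-> (2 %| z - C)%Z.
  move=> z; split.
    case=> F [hF /eqmP hz]; have h1 := hIF F hF.
    have h2 := dvdD hz (dvdN h1).
    have h3 := dvdz_trans (S_even sg w hw) h2.
    have e : Ind sg w F c - z + - (Ind sg w F c - (C + (sp - - sp) * F (size w).-1))
      = (C - z) + 2 * (sp * F (size w).-1) by ring.
    rewrite e in h3; move: h3; generalize (sp * F (size w).-1) => t; lia.
  move=> hz; set m := ((z - C) %/ 2)%Z.
  have hm : m * 2 = z - C := divzK hz.
  exists (fun k => Hv sg w (sp * m) k.+1); split; first exact: colFa.
  apply/eqmP; eapply (dvdE (hIa (sp * m))).
  have e : (sp - - sp) * (sp * m) = z - C.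
    have -> : (sp - - sp) * (sp * m) = (sp * sp) * (m * 2) by ring.
    by rewrite hsp mul1r hm.
  rewrite e; ring.
case h2C : (2 %| C)%Z; [left|right] => z; rewrite key; move: h2C; generalize C => C'; lia.
Qed.
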